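(* Let $R$ be a finite group, let $S\subseteq R$ and let $K,H$ be subgroups with $1<K<H<R$. Suppose that (1) $K$ is characteristic in $R$, (2) $K$ is maximal in $H$, (3) $K(S\setminus H)=S\setminus H$, and (4) $K(S\setminus K)\neq S\setminus K$. Then $\mathrm{Aut}(R)_S$ normalises $H$ (i.e. every automorphism of $R$ fixing $S$ setwise maps $H$ to itself).
   Context: $\mathrm{Aut}(R)_S$ denotes the group of automorphisms of $R$ that fix the subset $S$ setwise. *)

(* Defs.v *)
From mathcomp Require Import all_boot all_fingroup all_solvable.

(* Main.v *)
Require Import Defs.
From mathcomp Require Import all_boot all_fingroup all_solvable.

Local Open Scope group_scope.

Theorem proposition2p4 (gT : finGroupType) (R K H : {group gT}) (S : {set gT})
  (hSR : S \subset R)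
  (h1K : [1 gT] \proper K) (hKH : K \proper H) (hHR : H \proper R)
  (hchar : K \char R)
  (hmax : maximal K H)
  (h3 : K * (S :\: H) = S :\: H)
  (h4 : K * (S :\: K) != S :\: K) :
  forall a : {perm gT}, a \in Aut R -> a @: S = S -> a @: H = H.
Proof.
move=> a aR aS.
have sKH := proper_sub hKH; have sHR := proper_sub hHR.
have sKR := subset_trans sKH sHR.

have fE : forall x, autm aR x = a x by move=> x; rewrite autmE.
have imE : forall A : {set gT}, A \subset R -> autm aR @* A = a @: A.
  by move=> A sAR; rewrite morphimEsub //; apply: eq_imset.
have aK : a @: K = K.
  have /charP[_ /(_ (autm aR))] := hchar.
  by rewrite injm_autm im_autm imE // => ->.
have inj := @perm_inj _ a.
have claim : forall x k, x \in S -> x \notin a @: H -> k \in K ->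
    (k * x \in S) && (k * x \notin a @: H).
  move=> x k xS xH kK.
  move: xS; rewrite -{1}aS => /imsetP[y yS] xE; subst x.
  move: kK; rewrite -{1}aK => /imsetP[k' k'K] kE; subst k.
  have yH : y \notin H by apply: contra xH => yH; rewrite mem_imset.
  have : k' * y \in S :\: H by rewrite -h3 mem_mulg // inE yH.
  rewrite inE => /andP[nH yS'].
  have yR : y \in R := subsetP hSR y yS.
  have kR : k' \in R := subsetP sKR k' k'K.
  have e : a k' * a y = a (k' * y) by rewrite -!fE morphM.
  by rewrite e -{1}aS !mem_imset // yS' nH.
suff eqH : a @: H \subset H.
  by apply/eqP; rewrite eqEcard eqH card_imset // leqnn.
apply/negPn/negP => neq.
case/negP: h4; apply/eqP/eqP; rewrite eqEsubset mulG_subr andbT.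
set G := (autm aR @* H)%G.
have GE : G :=: a @: H by rewrite /= imE.
have HG : H :&: G = K.
  have /maxgroupP[_ mx] := hmax.
  have := mx (H :&: G)%G; rewrite /= => mx'.
  apply: mx'; last by rewrite subsetI sKH GE -aK imsetS.
  rewrite /proper subsetIl /=; apply/negP => sHG.
  case/negP: neq.
  have sHG' : H \subset a @: H by rewrite -GE; apply: subset_trans sHG (subsetIr _ _).
  by rewrite -(geq_leqif (subset_leqif_card sHG')) card_imset.
apply/subsetP => z /mulsgP[k x kK]; rewrite inE => /andP[xK xS] ->.
rewrite inE.
have kxK : (k * x \in K) = (x \in K) by rewrite groupMl.
rewrite kxK xK /=.
case xH: (x \in H).
  case xG: (x \in a @: H).
    have xG' : x \in G by rewrite GE xG.
    by move: xK; rewrite -HG inE xH xG'.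
  by case/andP: (claim x k xS (negbT xG) kK).
have : k * x \in S :\: H by rewrite -h3 mem_mulg // inE xH.
by rewrite inE => /andP[].
Qed.
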